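(* Let $f_0,g_1,\dots,g_q:\mathbb{R}^n\to\mathbb{R}$ with $f_0$ continuous and each $g_i$ lower semicontinuous. For $\nu\in\mathbb{N}$ let $f_0^\nu,g_1^\nu,\dots,g_q^\nu:\mathbb{R}^n\to\mathbb{R}$ and $\alpha^\nu\ge0$ satisfy $\sup_{x\in\mathbb{R}^n}|f_0^\nu(x)-f_0(x)|\le\alpha^\nu$ and $\sup_{x\in\mathbb{R}^n}\max_{i=1,\dots,q}|g_i^\nu(x)-g_i(x)|\le\alpha^\nu$, and let $\theta^\nu>0$. Define $f,f^\nu:\mathbb{R}^n\times\mathbb{R}^q\to(-\infty,\infty]$ by $$f(x,y)=f_0(x)+\sum_{i=1}^q\iota_{\{0\}}(y_i)+\sum_{i=1}^q\iota_{(-\infty,0]}\big(g_i(x)-y_i\big),$$ $$f^\nu(x,y)=f_0^\nu(x)+\sum_{i=1}^q\phi^\nu(y_i)+\sum_{i=1}^q\iota_{(-\infty,0]}\big(g_i^\nu(x)-y_i\big),\quad \phi^\nu(\beta)=\theta^\nu\beta \text{ if }\beta\ge0,\ \phi^\nu(\beta)=\infty\text{ otherwise}.$$ If $\theta^\nu\to\infty$ and $\theta^\nu\alpha^\nu\to0$, then $f^\nu$ epi-converges to $f$.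
   Context: For a set $C$, $\iota_C(u)=0$ if $u\in C$ and $\iota_C(u)=\infty$ otherwise. A sequence $f^\nu$ epi-converges to $f$ if the epigraphs $\{(z,\alpha)\mid f^\nu(z)\le\alpha\}$ set-converge in the Painlevé–Kuratowski sense to $\{(z,\alpha)\mid f(z)\le\alpha\}$; equivalently, (i) for every $z^\nu\to z$, $\liminf f^\nu(z^\nu)\ge f(z)$, and (ii) for every $z$ there exists $z^\nu\to z$ with $\limsup f^\nu(z^\nu)\le f(z)$. *)

(* Defs.v *)
From Stdlib Require Import Reals ClassicalEpsilon.
From mathcomp Require Import ssreflect ssrfun ssrbool eqtype ssrnat seq fintype.
Open Scope R_scope.

Definition vec (n : nat) := 'I_n -> R.

(* Convergence of sequences in R^n (coordinatewise = Euclidean). *)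
Definition vcv {n : nat} (xs : nat -> vec n) (x : vec n) : Prop :=
  forall i : 'I_n, Un_cv (fun k => xs k i) (x i).

Definition seq_continuous {n : nat} (h : vec n -> R) : Prop :=
  forall (xs : nat -> vec n) (x : vec n), vcv xs x -> Un_cv (fun k => h (xs k)) (h x).

Definition lsc {n : nat} (h : vec n -> R) : Prop :=
  forall (xs : nat -> vec n) (x : vec n), vcv xs x ->
    forall eps, eps > 0 -> exists N, forall k, (k >= N)%nat -> h (xs k) > h x - eps.

(* Extended reals (-oo, +oo]: None stands for +oo. *)
Definition ER := option R.
Definition eadd (a b : ER) : ER :=
  match a, b with Some x, Some y => Some (x + y) | _, _ => None end.
Definition esum {q : nat} (F : 'I_q -> ER) : ER :=
  foldr (fun i acc => eadd (F i) acc) (Some 0) (enum 'I_q).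

Definition iota (C : R -> Prop) (u : R) : ER :=
  match excluded_middle_informative (C u) with left _ => Some 0 | right _ => None end.

Definition phi (theta beta : R) : ER :=
  match Rle_dec 0 beta with left _ => Some (theta * beta) | right _ => None end.

Definition f_lim {n q : nat} (f0 : vec n -> R) (g : 'I_q -> vec n -> R)
  (x : vec n) (y : vec q) : ER :=
  eadd (eadd (Some (f0 x)) (esum (fun i => iota (fun u => u = 0) (y i))))
       (esum (fun i => iota (fun u => u <= 0) (g i x - y i))).

Definition f_nu {n q : nat} (theta : R) (f0n : vec n -> R) (gn : 'I_q -> vec n -> R)
  (x : vec n) (y : vec q) : ER :=
  eadd (eadd (Some (f0n x)) (esum (fun i => phi theta (y i))))
       (esum (fun i => iota (fun u => u <= 0) (gn i x - y i))).

Definition point (n q : nat) := (vec n * vec q * R)%type.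

Definition epi {n q : nat} (F : vec n -> vec q -> ER) (p : point n q) : Prop :=
  match p with (x, y, a) =>
    match F x y with Some v => v <= a | None => False end end.

Definition pcv {n q : nat} (ps : nat -> point n q) (p : point n q) : Prop :=
  vcv (fun k => fst (fst (ps k))) (fst (fst p)) /\
  vcv (fun k => snd (fst (ps k))) (snd (fst p)) /\
  Un_cv (fun k => snd (ps k)) (snd p).

Definition inner_limit {n q : nat} (C : nat -> point n q -> Prop) (p : point n q) : Prop :=
  exists N0 (ps : nat -> point n q),
    (forall k, (k >= N0)%nat -> C k (ps k)) /\ pcv ps p.

Definition outer_limit {n q : nat} (C : nat -> point n q -> Prop) (p : point n q) : Prop :=
  exists (N : nat -> nat) (ps : nat -> point n q),
    (forall k, (N k < N (S k))%nat) /\ (forall k, C (N k) (ps k)) /\ pcv ps p.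

Definition PK_converges {n q : nat} (C : nat -> point n q -> Prop) (D : point n q -> Prop) : Prop :=
  (forall p, outer_limit C p -> D p) /\ (forall p, D p -> inner_limit C p).

Definition epi_converges {n q : nat} (Fs : nat -> vec n -> vec q -> ER)
  (F : vec n -> vec q -> ER) : Prop :=
  PK_converges (fun k => epi (Fs k)) (epi F).

(* Main.v *)
Require Import Defs.
From Stdlib Require Import Reals.
From mathcomp Require Import ssreflect ssrfun ssrbool eqtype ssrnat seq fintype.
From Stdlib Require Import Lra Lia ClassicalEpsilon.
From mathcomp Require Import zify.
Open Scope R_scope.

Section Aux.
Variable q : nat.
Variable F : 'I_q -> ER.

Lemma foldr_nonneg (l : seq 'I_q) s :
  (forall i v, F i = Some v -> 0 <= v) ->
  foldr (fun i acc => eadd (F i) acc) (Some 0) l = Some s ->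
  0 <= s /\ forall i, i \in l -> exists v, F i = Some v /\ v <= s.
Proof.
move=> Hp; elim: l s => [|a l IH] s /=.
  by case=> <-; split; [lra| by []].
case Ha: (F a) => [va|] //; case Hl: (foldr _ _ l) => [sl|] //= [<-].
have [H0 H1] := IH sl Hl.
have Hva := Hp _ _ Ha.
split; first lra.
move=> i; rewrite in_cons => /orP [/eqP -> | Hi].
  by exists va; split => //; lra.
have [v [Hv Hv']] := H1 i Hi; exists v; split => //; lra.
Qed.

Lemma foldr_const (l : seq 'I_q) c :
  (forall i, F i = Some c) ->
  foldr (fun i acc => eadd (F i) acc) (Some 0) l = Some (INR (size l) * c).
Proof.
move=> Hc; elim: l => [|a l IH] /=; first by rewrite Rmult_0_l.
rewrite Hc IH /=; f_equal; case: (size l) => [|m]; simpl; ring.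
Qed.
End Aux.

Lemma esum_nonneg q (F : 'I_q -> ER) s :
  (forall i v, F i = Some v -> 0 <= v) -> esum F = Some s ->
  0 <= s /\ forall i, exists v, F i = Some v /\ v <= s.
Proof.
move=> Hp Hs; have [H0 H1] := @foldr_nonneg q F _ _ Hp Hs; split => // i.
by apply: H1; rewrite mem_enum.
Qed.

Lemma esum_const q (F : 'I_q -> ER) c :
  (forall i, F i = Some c) -> esum F = Some (INR q * c).
Proof. move=> Hc; rewrite /esum (@foldr_const q F _ c Hc) size_enum_ord //. Qed.

Lemma iota_some C u v : Defs.iota C u = Some v -> C u /\ v = 0.
Proof. rewrite /Defs.iota; case: excluded_middle_informative => // H [<-]; by []. Qed.

Lemma iota_true C u : C u -> Defs.iota C u = Some 0.
Proof. rewrite /Defs.iota; case: excluded_middle_informative => //. Qed.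

Lemma phi_some th b v : phi th b = Some v -> 0 <= b /\ v = th * b.
Proof. rewrite /phi; case: Rle_dec => // H [<-]; by []. Qed.

Lemma epi_nu_inv n q th f0n (gn : 'I_q -> vec n -> R) x y a :
  0 < th -> epi (f_nu th f0n gn) (x, y, a) ->
  (forall i, 0 <= y i /\ gn i x <= y i /\ th * y i <= a - f0n x) /\ f0n x <= a.
Proof.
move=> Hth; rewrite /epi /f_nu.
case Hs: (esum (fun i => phi th (y i))) => [s|]; last by [].
case Ht: (esum (fun i => Defs.iota (fun u => u <= 0) (gn i x - y i))) => [t|]; last by [].
move=> /= Hv.
have [Hs0 Hs1] : 0 <= s /\ forall i, exists v, phi th (y i) = Some v /\ v <= s.
  apply: esum_nonneg Hs => i v /phi_some [? ->]; nra.
have [Ht0 Ht1] : 0 <= t /\ forall i, exists v,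
   Defs.iota (fun u => u <= 0) (gn i x - y i) = Some v /\ v <= t.
  apply: esum_nonneg Ht => i v /iota_some [_ ->]; lra.
split; last lra.
move=> i; have [v [/phi_some [Hy ->] Hv']] := Hs1 i.
have [w [/iota_some [Hg _] _]] := Ht1 i.
split => //; split; lra.
Qed.

Lemma f_lim_inv n q f0 (g : 'I_q -> vec n -> R) x y a :
  epi (f_lim f0 g) (x, y, a) ->
  (forall i, y i = 0) /\ (forall i, g i x <= 0) /\ f0 x <= a.
Proof.
rewrite /epi /f_lim.
case Hs: (esum (fun i => Defs.iota (fun u => u = 0) (y i))) => [s|]; last by [].
case Ht: (esum (fun i => Defs.iota (fun u => u <= 0) (g i x - y i))) => [t|]; last by [].
move=> /= Hv.
have [Hs0 Hs1] : 0 <= s /\ forall i, exists v,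
   Defs.iota (fun u => u = 0) (y i) = Some v /\ v <= s.
  apply: esum_nonneg Hs => i v /iota_some [_ ->]; lra.
have [Ht0 Ht1] : 0 <= t /\ forall i, exists v,
   Defs.iota (fun u => u <= 0) (g i x - y i) = Some v /\ v <= t.
  apply: esum_nonneg Ht => i v /iota_some [_ ->]; lra.
have Hy : forall i, y i = 0.
  by move=> i; have [v [/iota_some [H _] _]] := Hs1 i.
split => //; split; last lra.
move=> i; have [v [/iota_some [H _] _]] := Ht1 i; move: H; rewrite Hy; lra.
Qed.

Lemma f_lim_val n q f0 (g : 'I_q -> vec n -> R) x y :
  (forall i, y i = 0) -> (forall i, g i x <= 0) ->
  f_lim f0 g x y = Some (f0 x + INR q * 0 + INR q * 0).
Proof.
move=> Hy Hg; rewrite /f_lim.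
rewrite (@esum_const _ _ 0); last by move=> i; apply: iota_true.
rewrite (@esum_const _ _ 0) //; move=> i; apply: iota_true; rewrite Hy; move: (Hg i); lra.
Qed.

Lemma lim_le u l c : Un_cv u l -> (exists K, forall k, (K <= k)%coq_nat -> u k <= c) -> l <= c.
Proof.
move=> Hu [K HK]; apply: Rnot_lt_le => Hlt.
have [N HN] := Hu (l - c) ltac:(lra).
have := HN (Nat.max N K) ltac:(lia); have := HK (Nat.max N K) ltac:(lia).
rewrite /R_dist; move=> H1 H2; have := Rle_abs (l - u (Nat.max N K)); 
rewrite -Rabs_Ropp; have -> : - (l - u (Nat.max N K)) = u (Nat.max N K) - l by ring.
lra.
Qed.

Lemma lim_ge u l c : Un_cv u l -> (exists K, forall k, (K <= k)%coq_nat -> c <= u k) -> c <= l.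
Proof.
move=> Hu [K HK]; apply: Rnot_lt_le => Hlt.
have [N HN] := Hu (c - l) ltac:(lra).
have := HN (Nat.max N K) ltac:(lia); have := HK (Nat.max N K) ltac:(lia).
rewrite /R_dist; move=> H1 H2; have := Rle_abs (u (Nat.max N K) - l). lra.
Qed.

Lemma cv_lt u l eps : Un_cv u l -> 0 < eps ->
  exists K, forall k, (K <= k)%coq_nat -> l - eps < u k < l + eps.
Proof.
move=> Hu He; have [N HN] := Hu eps He; exists N => k Hk.
have := HN k Hk; rewrite /R_dist => H.
have := Rle_abs (u k - l); have := Rle_abs (- (u k - l)); rewrite Rabs_Ropp; lra.
Qed.

Arguments cv_lt {u l eps}.
Arguments lim_le {u l c}.
Arguments lim_ge {u l c}.

Theorem mainTheorem5 (n q : nat)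
  (f0 : vec n -> R) (g : 'I_q -> vec n -> R)
  (f0s : nat -> vec n -> R) (gs : nat -> 'I_q -> vec n -> R)
  (alpha theta : nat -> R)
  (Hf0 : seq_continuous f0)
  (Hg : forall i, lsc (g i))
  (Halpha : forall k, 0 <= alpha k)
  (Hf0s : forall k x, Rabs (f0s k x - f0 x) <= alpha k)
  (Hgs : forall k i x, Rabs (gs k i x - g i x) <= alpha k)
  (Htheta : forall k, 0 < theta k)
  (Htheta_inf : cv_infty theta)
  (Hthal : Un_cv (fun k => theta k * alpha k) 0) :
  epi_converges (fun k => f_nu (theta k) (f0s k) (gs k)) (f_lim f0 g).
Proof.
have Hasmall : forall eps, 0 < eps -> exists K, forall m, (K <= m)%coq_nat -> alpha m < eps.
  move=> eps He; have [K1 H1] := Htheta_inf 1.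
  have [K2 H2] := cv_lt Hthal He.
  exists (Nat.max K1 K2) => m Hm.
  have := H1 m ltac:(lia); have := H2 m ltac:(lia); have := Halpha m.
  move=> ? ? ?; nra.
have Hf0s' : forall k x, f0 x - alpha k <= f0s k x <= f0 x + alpha k.
  move=> k x; have := Hf0s k x; have := Rle_abs (f0s k x - f0 x);
  have := Rle_abs (- (f0s k x - f0 x)); rewrite Rabs_Ropp; lra.
have Hgs' : forall k i x, g i x - alpha k <= gs k i x <= g i x + alpha k.
  move=> k i x; have := Hgs k i x; have := Rle_abs (gs k i x - g i x);
  have := Rle_abs (- (gs k i x - g i x)); rewrite Rabs_Ropp; lra.
split.
- move=> [[x y] a] [N [ps [HN [HC [Hx [Hy Ha]]]]]] /=.
  simpl in Hx, Hy, Ha.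
  set xk := fun k => fst (fst (ps k)). set yk := fun k => snd (fst (ps k)).
  set ak := fun k => snd (ps k).
  have Hk : forall k, (forall i, 0 <= yk k i /\ gs (N k) i (xk k) <= yk k i /\
       theta (N k) * yk k i <= ak k - f0s (N k) (xk k)) /\ f0s (N k) (xk k) <= ak k.
    move=> k; move: (HC k); rewrite /xk /yk /ak; case: (ps k) => [[xx yy] aa] /= H.
    exact: epi_nu_inv H.
  have HNk : forall k, (k <= N k)%coq_nat.
    elim=> [|k IH]; first lia. have := HN k; lia.
  have Hf0x := Hf0 _ _ Hx.
  set B := Rabs (a - f0 x) + 3.
  have [K1 HK1] : exists K, forall k, (K <= k)%coq_nat -> forall i, theta (N k) * yk k i < B.
    have [Ka Ha'] := cv_lt Ha Rlt_0_1.
    have [Kf Hf'] := cv_lt Hf0x Rlt_0_1.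
    have [Kal Hal] := Hasmall 1 Rlt_0_1.
    exists (Nat.max Ka (Nat.max Kf Kal)) => k Hkk i.
    have := Ha' k ltac:(lia); have := Hf' k ltac:(lia).
    have := Hal (N k) ltac:(have := HNk k; lia).
    have [H1 H2] := Hk k; have [_ [_ H3]] := H1 i.
    have := Hf0s' (N k) (xk k); have := Rle_abs (a - f0 x).
    move: H3; rewrite /B /ak /xk /yk /=; lra.
  have Hysmall : forall eps, 0 < eps -> exists K, forall k, (K <= k)%coq_nat ->
      forall i, yk k i < eps.
    move=> eps He; have [K2 HK2] := Htheta_inf (B / eps).
    exists (Nat.max K1 K2) => k Hkk i.
    have H1 := HK1 k ltac:(lia) i.
    have H2 := HK2 (N k) ltac:(have := HNk k; lia).
    have H3 : B < eps * theta (N k).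
      have -> : B = eps * (B / eps) by field; lra.
      apply: Rmult_lt_compat_l => //.
    have := Htheta (N k); nra.
  have Hy0 : forall i, y i = 0.
    move=> i; apply: Rle_antisym.
    + apply: Rle_plus_epsilon => eps He; rewrite Rplus_0_l.
      apply: (lim_le (Hy i)); have [K HK] := Hysmall eps He.
      exists K => k Hkk; have := HK k Hkk i; rewrite /yk; lra.
    + apply: (lim_ge (Hy i)); exists 0%nat => k _; have [H1 _] := Hk k.
      exact: (proj1 (H1 i)).
  have Hgx : forall i, g i x <= 0.
    move=> i; apply: Rle_plus_epsilon => eps He; rewrite Rplus_0_l.
    have He3 : 0 < eps / 3 by lra.
    have [K1' H1'] := Hg i _ _ Hx _ He3.
    have [K2' H2'] := Hysmall _ He3.
    have [K3' H3'] := Hasmall _ He3.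
    set k := Nat.max K1' (Nat.max K2' K3').
    have := H1' k ltac:(rewrite /k; lia).
    have := H2' k ltac:(rewrite /k; lia) i.
    have := H3' (N k) ltac:(have := HNk k; rewrite /k; lia).
    have [H4 _] := Hk k; have [_ [H5 _]] := H4 i.
    have := Hgs' (N k) i (xk k). rewrite /xk /yk in H5 |- *; lra.
  have Hfa : f0 x <= a.
    apply: Rle_plus_epsilon => eps He.
    have He3 : 0 < eps / 3 by lra.
    have [K1' H1'] := cv_lt Hf0x He3.
    have [K2' H2'] := cv_lt Ha He3.
    have [K3' H3'] := Hasmall _ He3.
    set k := Nat.max K1' (Nat.max K2' K3').
    have := H1' k ltac:(rewrite /k; lia).
    have := H2' k ltac:(rewrite /k; lia).
    have := H3' (N k) ltac:(have := HNk k; rewrite /k; lia).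
    have [_ H4] := Hk k.
    have := Hf0s' (N k) (xk k). rewrite /xk /ak in H4 |- *; simpl; lra.
  rewrite (@f_lim_val _ _ f0 g x y Hy0 Hgx); lra.
- move=> [[x y] a] /= H.
  have [Hy0 [Hgx Hfa]] := @f_lim_inv _ _ f0 g x y a H.
  have Hal0 : Un_cv alpha 0.
    move=> eps He; have [K HK] := Hasmall eps He; exists K => k Hk.
    rewrite /R_dist Rminus_0_r Rabs_pos_eq //; exact: HK.
  exists 0%nat, (fun k => (x, (fun _ => alpha k), a + alpha k + INR q * (theta k * alpha k))).
  split.
  + move=> k _; rewrite /epi /f_nu.
    rewrite (@esum_const _ _ (theta k * alpha k)); last first.
      by move=> i; rewrite /phi; case: Rle_dec => // /(_ (Halpha k)).
    rewrite (@esum_const _ _ 0); last first.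
      move=> i; apply: iota_true; have := Hgs' k i x; have := Hgx i; lra.
    rewrite /=; have := Hf0s' k x; lra.
  + split; [|split] => /=.
    * move=> i eps He; exists 0%nat => k _; cbv beta; rewrite Rdist_eq //.
    * move=> i; rewrite Hy0; exact: Hal0.
    * have Hc : Un_cv (fun k => a + alpha k + INR q * (theta k * alpha k)) (a + 0 + INR q * 0).
        apply: CV_plus; [apply: CV_plus|apply: CV_mult] => //.
        - move=> eps He; exists 0%nat => k _; cbv beta; rewrite Rdist_eq //.
        - move=> eps He; exists 0%nat => k _; cbv beta; rewrite Rdist_eq //.
      by rewrite (_ : a + 0 + INR q * 0 = a) in Hc; [|ring].
Qed.
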